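(* If $\Gamma$ is a finite vertex-transitive graph with $\operatorname{Aut}(\Gamma)\cong A_5$, then the action of $\operatorname{Aut}(\Gamma)$ on $V(\Gamma)$ is imprimitive.
   Context: For $G$ transitive on $X$, a block is $B\subset X$ with $gB=B$ or $gB\cap B=\emptyset$ for all $g\in G$; it is nontrivial if $1<|B|<|X|$; the action is imprimitive if a nontrivial block exists and primitive otherwise. $A_5$ is the alternating group on $5$ letters. *)

(* Defs.v *)
From mathcomp Require Import all_boot all_fingroup all_solvable.
Set Implicit Arguments. Unset Strict Implicit. Unset Printing Implicit Defensive.
Local Open Scope group_scope.

(* A finite simple graph: vertex type V (finite), edge relation e,
   assumed symmetric and irreflexive in the theorem. *)

Definition graph_aut_set (V : finType) (e : rel V) : {set {perm V}} :=
  [set s : {perm V} | [forall x, forall y, e (s x) (s y) == e x y]].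

Lemma graph_aut_group_set (V : finType) (e : rel V) :
  group_set (graph_aut_set e).
Proof.
apply/andP; split.
  by rewrite inE; apply/forallP => x; apply/forallP => y; rewrite !perm1.
apply/subsetP => _ /mulsgP[s t Hs Ht ->].
rewrite !inE in Hs Ht *; apply/forallP => x; apply/forallP => y.
rewrite !permM.
by rewrite (eqP (forallP (forallP Ht (s x)) (s y))) (eqP (forallP (forallP Hs x) y)).
Qed.

Canonical graph_aut (V : finType) (e : rel V) : {group {perm V}} :=
  Group (graph_aut_group_set e).

Definition is_block (V : finType) (G : {set {perm V}}) (B : {set V}) : Prop :=
  forall g, g \in G -> (g @: B = B) \/ [disjoint g @: B & B].

Definition nontrivial_block (V : finType) (B : {set V}) : Prop :=
  1 < #|B| < #|V|.

Definition imprimitive (V : finType) (G : {set {perm V}}) : Prop :=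
  exists B : {set V}, nontrivial_block B /\ is_block G B.

(* Main.v *)
Require Import Defs.
From mathcomp Require Import all_boot all_fingroup all_solvable.
From Stdlib Require Import Classical.
From mathcomp Require Import zify.
Set Implicit Arguments. Unset Strict Implicit. Unset Printing Implicit Defensive.
Local Open Scope group_scope.

Definition tau : {perm 'I_5} := tperm (inord 0 : 'I_5) (inord 1).

Lemma odd_tau : odd_perm tau.
Proof. by rewrite odd_tperm; apply/eqP => /(congr1 val); rewrite /= !inordK. Qed.

Lemma imsetM (T : finType) (s t : {perm T}) (A : {set T}) : (s * t) @: A = t @: (s @: A).
Proof. by rewrite -imset_comp; apply: eq_imset => x; rewrite permM. Qed.

Lemma tperm_fix (T : finType) (c d : T) (X : {set T}) : (c \in X) = (d \in X) -> tperm c d @: X = X.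
Proof.
move=> hcd; apply/eqP; rewrite eqEcard card_imset ?leqnn ?andbT; last exact: perm_inj.
apply/subsetP => _ /imsetP[x xX ->]; case: tpermP => [xc|xd|_ _ //].
  by rewrite -hcd -xc.
by rewrite hcd -xd.
Qed.

Lemma pigeon (X Y : {set 'I_5}) :
  exists2 p, p \in 'Alt_('I_5) & p @: X = tau @: X /\ p @: Y = tau @: Y.
Proof.
have /injectivePn[c [d ncd eq_cd]] : ~~ injectiveb (fun x : 'I_5 => (x \in X, x \in Y)).
  apply/injectiveP => /leq_card; by rewrite card_prod card_bool card_ord.
case: eq_cd => hX hY.
exists (tperm c d * tau).
  by rewrite Alt_even odd_permM odd_tperm odd_tau ncd.
by rewrite !imsetM (tperm_fix hX) (tperm_fix hY).
Qed.

Lemma alt2 (a b x y : 'I_5) : a != b -> x != y ->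
  exists2 q, q \in 'Alt_('I_5) & q a = x /\ q b = y.
Proof.
move=> nab nxy.
have := Alt_trans ('I_5).
rewrite card_ord /= => tr3.
have tr2 := ntransitive_weak (isT : 2 <= 3) tr3.
have t1 : [tuple a; b] \in dtuple_on 2 [set: 'I_5] by rewrite inE /= inE nab; apply/subsetP => ? _; rewrite inE.
have t2 : [tuple x; y] \in dtuple_on 2 [set: 'I_5] by rewrite inE /= inE nxy; apply/subsetP => ? _; rewrite inE.
have [q qA eq] := atransP2 tr2 t1 t2.
exists q => //.
move/(congr1 val): eq => /= [-> ->]; done.
Qed.

Lemma ex_notin (A : {set 'I_5}) : (#|A| < 5)%N -> exists y, y \notin A.
Proof.
move=> hA; case: (pickP (fun y => y \notin A)) => [y hy|none]; first by exists y.
have : [set: 'I_5] \subset A by apply/subsetP => y _; move: (none y); rewrite /= => /negbFE.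
by move/subset_leq_card; rewrite cardsT card_ord leqNgt hA.
Qed.

Lemma alt1 (a x : 'I_5) : exists2 q, q \in 'Alt_('I_5) & q a = x.
Proof.
have [b nb] := ex_notin (A := [set a]) ltac:(by rewrite cards1).
have [y ny] := ex_notin (A := [set x]) ltac:(by rewrite cards1).
rewrite in_set1 in nb ny.
rewrite in_set1 in ny; rewrite eq_sym in nb; rewrite eq_sym in ny; have [q qA [qa _]] := alt2 nb ny.
by exists q.
Qed.

Lemma imset_fix (T : finType) (s : {perm T}) (A : {set T}) :
  (forall x, x \in A -> s x \in A) -> s @: A = A.
Proof.
move=> h; apply/eqP; rewrite eqEcard card_imset ?leqnn ?andbT; last exact: perm_inj.
by apply/subsetP => _ /imsetP[x xA ->]; apply: h.
Qed.

Lemma inN (T : finType) (q : {perm T}) (w : {set T}) : (q \in 'N(w | 'P)) = (q @: w == w).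
Proof.
apply/idP/eqP => [hq|hq].
  apply: imset_fix => x xw.
  by rewrite -[q x]/('P%act x q) (astabs_act _ hq).
apply/astabsP => x; rewrite /= -{1}hq apermE mem_imset //; exact: perm_inj.
Qed.

Lemma C0 (w : {set 'I_5}) : (0 < #|w|)%N -> (#|w| < 5)%N -> ~ ('Alt_('I_5) \subset 'N(w | 'P)).
Proof.
move=> w0 w5 sub; have [a aw] := card_gt0P w0; have [c cw] := ex_notin w5.
have [q qA qa] := alt1 a c.
have := subsetP sub q qA; rewrite inN => /eqP hq.
by move: cw; rewrite -hq -qa (mem_imset _ _ (@perm_inj _ q)) aw.
Qed.

Lemma final (w : {set 'I_5}) r : (0 < #|w| <= 2)%N -> r \in 'Alt_('I_5) ->
  (forall q, q \in 'Alt_('I_5) -> r @: (q @: w) = tau @: (q @: w)) -> False.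
Proof.
move=> /andP[w0 w2] rA hr.
suff rt : r = tau by move: rA; rewrite Alt_even rt odd_tau.
apply/permP => x.
case: (eqVneq #|w| 1%N) => [/eqP/cards1P[a wa] | w1].
  have [q qA qa] := alt1 a x; have := hr q qA.
  by rewrite wa !imset_set1 qa => /set1_inj.
have /cards2P[a [b [nab wab]]] : #|w| == 2 by apply/eqP; lia.
have [y ny] := ex_notin (A := [set x]) ltac:(by rewrite cards1).
have [z nz] := ex_notin (A := [set x; y]) ltac:(by rewrite cards2; case: (_ != _)).
rewrite in_set1 in ny; rewrite !in_set2 negb_or in nz; case/andP: nz => nzx nzy.
have [q1 q1A [q1a q1b]] := alt2 nab (y := y) (x := x) ltac:(by rewrite eq_sym).
have [q2 q2A [q2a q2b]] := alt2 nab (y := z) (x := x) ltac:(by rewrite eq_sym).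
have h1 := hr q1 q1A; have h2 := hr q2 q2A.
rewrite wab !imsetU1 !imset_set1 q1a q1b in h1; rewrite wab !imsetU1 !imset_set1 q2a q2b in h2.
have m1 : r x \in [set tau x; tau y] by rewrite -h1 !inE eqxx.
have m2 : r x \in [set tau x; tau z] by rewrite -h2 !inE eqxx.
move: m1 m2; rewrite !inE => /orP[/eqP//|/eqP e1] /orP[/eqP//|/eqP e2].
have yz : y = z by apply: (@perm_inj _ tau); rewrite -e1 -e2.
by move: nzy; rewrite yz eqxx.
Qed.

Lemma imset1p (T : finType) (A : {set T}) : (1 : {perm T}) @: A = A.
Proof. by rewrite -[RHS]imset_id; apply: eq_imset => x; rewrite perm1. Qed.


Lemma orbit_cases (K : {group {perm 'I_5}}) :
  (exists2 w : {set 'I_5}, (0 < #|w| <= 2)%N & K \subset 'N(w | 'P)) \/ (5 %| #|K|)%N.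
Proof.
pose O := orbit 'P K (inord 0 : 'I_5).
have aO : K \subset 'N(O | 'P) := acts_orbit _ _ (subsetT K).
have O0 : (0 < #|O|)%N by apply/card_gt0P; exists (inord 0); apply: orbit_refl.
have O5 : (#|O| <= 5)%N by have := max_card (mem O); rewrite card_ord.
have hc := cardsC O; rewrite card_ord in hc.
case: (leqP #|O| 2) => [le2|gt2]; first by left; exists O; rewrite ?O0.
case: (ltnP #|O| 5) => [lt5|ge5].
  by left; exists (~: O); [apply/andP; split; lia | rewrite astabsC].
have e5 : #|O| = 5 by apply/eqP; rewrite eqn_leq O5 ge5.
by right; move: (dvdn_indexg K 'C_K[inord 0 | 'P]); rewrite -card_orbit -/O e5.
Qed.

Lemma arith n h : (h * n = 60 -> 5 %| h -> 60 <= n`! -> n = 6 \/ n = 12)%N.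
Proof.
move=> hn /dvdnP[k hk] hf; subst h.
have kn : (k * n = 12)%N by nia.
have n12 : (n %| 12)%N by apply/dvdnP; exists k; rewrite kn.
have [n4|n5] := leqP n 4.
  have f4 : (n`! <= 24)%N by case: n n4 {hn kn n12 hf} => [|[|[|[|[|n]]]]] => //.
  lia.
have n12' := dvdn_leq (isT : 0 < 12)%N n12.
clear hn kn hf; case: n n12 n12' n5 => [|[|[|[|[|[|[|[|[|[|[|[|[|n]]]]]]]]]]]]] h1 h2 h3; try by [left|right]; exfalso; move: h1 h2 h3; rewrite /=; try done. 
Qed.

Section Main.
Variables (V : finType) (e : rel V).
Hypothesis e_irr : irreflexive e.
Local Notation G := (graph_aut e).
Hypothesis vtrans : [transitive G, on [set: V] | 'P].
Hypothesis cardG : #|G| = 60.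
Hypothesis simG : simple G.
Hypothesis prim : ~ imprimitive G.
Variable v : V.
Local Notation H := ('C_G[v | 'P]).

Lemma autE s x y : s \in G -> e (s x) (s y) = e x y.
Proof. by rewrite inE => /forallP/(_ x)/forallP/(_ y)/eqP. Qed.

Lemma inH g : (g \in H) = (g \in G) && (g v == v).
Proof. by rewrite inE; congr (_ && _); apply/astab1P/eqP. Qed.


Lemma sHG : H \subset G. Proof. exact: subsetIl. Qed.

Lemma cardV : #|V| = #|G : H|.
Proof. by rewrite -card_orbit (atransP vtrans) ?inE // cardsT. Qed.

Lemma maxH (L : {group {perm V}}) : H \subset L -> L \subset G -> L :=: H \/ L :=: G.
Proof.
move=> sHL sLG.
pose B := orbit 'P L v.
have LB : forall g, g \in L -> g @: B = B.
  move=> g Lg; apply: imset_fix => x /orbitP[l Ll <-].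
  by apply/orbitP; exists (l * g); rewrite ?groupM //= /aperm permM.
have blk : is_block G B.
  move=> g Gg; case: (boolP [disjoint g @: B & B]) => [|hnd]; [by right | left].
  move: hnd; rewrite -setI_eq0 => /set0Pn[x /setIP[/imsetP[y /orbitP[l1 Ll1 <-] ->] /orbitP[l2 Ll2 eq2]]].
  apply: LB.
  have Gl1 := subsetP sLG _ Ll1; have Gl2 := subsetP sLG _ Ll2.
  have Lc : l1 * g * l2^-1 \in H.
    rewrite inH; apply/andP; split; first by rewrite !groupM ?groupV.
    apply/eqP; have h1 := permM (l1 * g) (l2^-1) v; have h2 := permM l1 g v.
    rewrite h1 h2.
    change (l2 v = g (l1 v)) in eq2.
    by rewrite -eq2 -(permM l2) mulgV perm1.
  have Lc' : l1 * g * l2^-1 \in L := subsetP sHL _ Lc.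
  have -> : g = l1^-1 * (l1 * g * l2^-1) * l2 by rewrite !mulgA mulVg mul1g mulgKV.
  move: Lc'; set c := l1 * g * l2^-1 => Lc'.
  exact: (groupM (groupM (groupVr Ll1) Lc') Ll2).
have CL : 'C_L[v | 'P] = H.
  apply/setP => x; rewrite in_setI [x \in H]in_setI.
  apply/andP/andP => [[Lx cx]|[Gx cx]]; split => //; first exact: (subsetP sLG _ Lx).
  by apply: (subsetP sHL); rewrite in_setI Gx.
have cB : #|B| = #|L : H| by rewrite /B card_orbit CL.
have : ~ (1 < #|B| < #|V|)%N by move=> h; apply: prim; exists B.
rewrite cB cardV => nt.
have [le1|lt1] := leqP #|L : H| 1.
  left; symmetry; apply: index1g => //.
  by apply/eqP; rewrite eqn_leq le1 indexg_gt0.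
have [ltG|geG] := ltnP #|L : H| #|G : H|; first by case: nt; rewrite lt1 ltG.
right; apply/eqP; rewrite eqEcard sLG /=.
rewrite -(Lagrange sHG) -(Lagrange sHL) leq_mul2l geG orbT //.
Qed.

Variable f : {morphism G >-> {perm 'I_5}}.
Hypothesis injf : 'injm f.
Hypothesis fG : f @* G = 'Alt_('I_5).
Local Notation K := (f @* H).

Lemma maxK (L : {group {perm 'I_5}}) : K \subset L -> L \subset 'Alt_('I_5) ->
  L :=: K \/ L :=: 'Alt_('I_5).
Proof.
move=> sKL sLA.
have sL : L \subset f @* G by rewrite fG.
have h1 : H \subset f @*^-1 L by rewrite -sub_morphim_pre ?sHG.
have h2 : f @*^-1 L \subset G := morphpre_sub f L.
by case: (maxH h1 h2) => E; [left|right]; rewrite -(morphpreK sL) E.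
Qed.

Lemma omega_case (w : {set 'I_5}) : (0 < #|w| <= 2)%N -> K \subset 'N(w | 'P) -> False.
Proof.
move=> w02 sKw; have /andP[w0 w2] := w02.
have sKA : K \subset 'Alt_('I_5) by rewrite -fG morphimS // sHG.
have sKN : K \subset 'N_('Alt_('I_5))(w | 'P) by rewrite subsetI sKA.
have [EN|EA] := maxK sKN (subsetIl _ _); last first.
  by apply: (C0 w0 (leq_ltn_trans w2 (isT : 2 < 5)%N)); rewrite -EA subsetIr.
have fH : forall g, g \in G -> (f g @: w == w) = (g \in H).
  move=> g Gg; have fgA : f g \in 'Alt_('I_5) by rewrite -fG mem_morphim.
  rewrite -inN -[f g \in 'N(w | 'P)]andTb -fgA -in_setI -/('N_('Alt_('I_5))(w | 'P)) EN.
  apply/idP/idP => [/morphimP[y Gy Hy fy]|Hg]; last exact: mem_morphim.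
  by rewrite (injmP injf _ _ Gg Gy fy).
pose gof u := odflt 1 [pick g in G | g v == u].
have gofP : forall u, gof u \in G /\ gof u v = u.
  move=> u; rewrite /gof; case: pickP => [g /andP[Gg /eqP]|none] //.
  have [a Ga eqa] := atransP2 vtrans (in_setT v) (in_setT u).
  by move: (none a); rewrite Ga eqa /= apermE eqxx.
pose beta u := f (gof u) @: w.
have betaE : forall g u, g \in G -> beta (g u) = f g @: beta u.
  move=> g u Gg; have [Ga va] := gofP (g u); have [Gb0 vb0] := gofP u.
  set a := gof (g u) in Ga va *.
  have Gb : gof u * g \in G by rewrite groupM.
  have Gc : gof u * g * a^-1 \in G by rewrite groupM ?groupV.
  have cH : gof u * g * a^-1 \in H.
    rewrite inH Gc /=; apply/eqP.
    have h1 := permM (gof u * g) a^-1 v; have h2 := permM (gof u) g v.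
    by rewrite h1 h2 vb0 -va permK.
  have := fH _ Gc; rewrite cH => /eqP.
  rewrite (morphM f Gb (groupVr Ga)) (morphV f Ga) (morphM f Gb0 Gg) => E.
  by rewrite /beta -imsetM -[in LHS]E -imsetM mulgKV.
have beta_v : beta v = w.
  have [Gv vv] := gofP v; apply/eqP; rewrite /beta fH //.
  by rewrite inH Gv vv eqxx.
have beta_inj : injective beta.
  move=> u u' E; have [Ga va] := gofP u; have [Ga' va'] := gofP u'.
  have Gc : gof u * (gof u')^-1 \in G by rewrite groupM ?groupV.
  have : gof u * (gof u')^-1 \in H.
    rewrite -fH // (morphM f Ga (groupVr Ga')) (morphV f Ga') imsetM.
    by rewrite -[f (gof u) @: w]/(beta u) E /beta -imsetM mulgV imset1p.
  rewrite inH Gc /= => /eqP; have h1 := permM (gof u) (gof u')^-1 v.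
  by rewrite h1 va => h2; rewrite -va' -h2 -permM mulVg perm1.
have fromA : forall p, p \in 'Alt_('I_5) -> exists2 g, g \in G & p = f g.
  move=> p; rewrite -fG => /morphimP[g Gg _ ->]; by exists g.
pose sf u := odflt v [pick x | beta x == tau @: beta u].
have sfP : forall u, beta (sf u) = tau @: beta u.
  move=> u; have [p pA [hp _]] := pigeon (beta u) (beta u).
  have [g Gg pfg] := fromA p pA.
  have ex : beta (g u) == tau @: beta u by rewrite betaE // -pfg hp.
  rewrite /sf; case: pickP => [x /eqP //|none].
  by move: (none (g u)); rewrite ex.
have sf_inj : injective sf.
  move=> u u' E; apply: beta_inj; apply: (imset_inj (@perm_inj _ tau)).
  by rewrite -!sfP E.
pose sig := perm sf_inj.
have sfE : forall x y, (exists2 g, g \in G & sf x = g x /\ sf y = g y).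
  move=> x y; have [p pA [hx hy]] := pigeon (beta x) (beta y).
  have [g Gg pfg] := fromA p pA.
  exists g => //; split; apply: beta_inj; by rewrite sfP betaE // -pfg.
have sigG : sig \in G.
  rewrite inE; apply/forallP => x; apply/forallP => y; rewrite !permE.
  have [g Gg [-> ->]] := sfE x y.
  by rewrite autE.
apply: (@final w (f sig) w02); first by rewrite -fG mem_morphim.
move=> q qA; have [g Gg ->] := fromA q qA.
by rewrite -beta_v -!betaE // permE sfP.
Qed.

Lemma case12 : #|H| = 5 -> False.
Proof.
move=> cH; have LH := Lagrange sHG; rewrite cardG cH in LH.
have iH : #|G : H| = 12 by change (5 * #|G : H| = 60)%N in LH; lia.
have sHN : H \subset 'N_G(H) by rewrite subsetI sHG normG.
case: (maxH sHN (subsetIl _ _)) => EN.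
  have syl : 5.-Sylow(G) H by rewrite /pHall sHG /pgroup cH iH.
  have := card_Syl syl; rewrite EN iH => c12.
  by have := card_Syl_mod G (isT : prime 5); rewrite c12.
have sGN : G \subset 'N(H) by have := subsetIr G 'N(H); rewrite EN.
have nHG : H <| G by rewrite /normal sHG sGN.
case/simpleP: simG => _ /(_ _ nHG) [E|E].
  by move: cH; rewrite E cards1.
by move: cH; rewrite E cardG.
Qed.

Lemma case6 : #|H| = 10 -> #|V| = 6 -> False.
Proof.
move=> cH cV.
have [x Hx ox] := Cauchy (isT : prime 5) (eq_ind_r (fun n => 5 %| n) (isT : 5 %| 10) cH).
have /andP[Gx /eqP xv] : (x \in G) && (x v == v) by rewrite -inH.
have [w xw] : exists w, x w != w.
  case: (pickP (fun w => x w != w)) => [w hw|none]; first by exists w.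
  have x1 : x = 1 by apply/permP => z; rewrite perm1; apply/eqP; move: (none z) => /negbFE.
  by move: ox; rewrite x1 order1.
have wv : w != v by apply: contraNneq xw => ->; rewrite xv.
have sXH : <[x]> \subset H by rewrite cycle_subG.
pose O := orbit 'P <[x]> w.
have cO : (#|O| %| 5)%N by rewrite /O card_orbit -ox orderE dvdn_indexg.
have O1 : #|O| != 1%N.
  apply/eqP => /card_orbit1 O1; have : ('P%act w x \in O) := mem_orbit 'P w (cycle_id x).
  by rewrite /O O1 inE /= apermE (negbTE xw).
have O5 : #|O| = 5 by apply/(prime_nt_dvdP (isT : prime 5) O1).
have OC : O = [set~ v].
  apply/eqP; rewrite eqEcard cardsC1 cV O5 andbT.
  apply/subsetP => z /orbitP[y yX <-]; rewrite !inE /= apermE.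
  have /andP[_ /eqP yv] : (y \in G) && (y v == v) by rewrite -inH (subsetP sXH).
  by apply: contra wv => /eqP E; apply/eqP; apply: (@perm_inj _ y); rewrite E yv.
have econst : forall a b, a != b -> e a b = e v w.
  move=> a b nab.
  have [g Gg eqg] := atransP2 vtrans (in_setT a) (in_setT v).
  rewrite /= apermE in eqg.
  have : g b \in O by rewrite OC !inE eqg; apply: contra nab => /eqP/perm_inj ->.
  case/orbitP => y yX; rewrite /= apermE => yw.
  have /andP[Gy /eqP yv] : (y \in G) && (y v == v) by rewrite -inH (subsetP sXH).
  by rewrite -(autE _ _ Gg) -eqg -yw -{1}yv autE.
have allG : forall s : {perm V}, s \in G.
  move=> s; rewrite inE; apply/forallP => a; apply/forallP => b.
  case: (eqVneq a b) => [->|nab]; first by rewrite !e_irr.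
  by rewrite !econst // (inj_eq perm_inj).
have : #|G| = #|V|`!.
  rewrite -(card_Sym V); apply: eq_card => s; rewrite allG; by rewrite inE.
by rewrite cardG cV.
Qed.

Lemma trans_case : (5 %| #|K|)%N -> False.
Proof.
rewrite (card_injm injf sHG) => h5.
have LH := Lagrange sHG; rewrite cardG -cardV in LH.
have hf : (60 <= #|V|`!)%N.
  rewrite -cardG -(card_Sym V); exact: subset_leq_card (subsetT G).
case: (arith LH h5 hf) => [cV|cV].
  by apply: case6 => //; change (#|H| * #|V| = 60)%N in LH; rewrite cV in LH; lia.
by apply: case12; change (#|H| * #|V| = 60)%N in LH; rewrite cV in LH; lia.
Qed.

End Main.

Theorem mainTheorem11 (V : finType) (e : rel V)
  (e_sym : symmetric e) (e_irr : irreflexive e)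
  (vtrans : [transitive graph_aut e, on [set: V] | 'P])
  (isoA5 : graph_aut e \isog 'Alt_('I_5)) :
  imprimitive (graph_aut e).
Proof.
apply: NNPP => prim.
have cardG : #|graph_aut e| = 60.
  rewrite (card_isog isoA5); have := card_Alt (T := 'I_5); rewrite card_ord => /(_ isT).
  by move=> h; apply/eqP; rewrite -(eqn_pmul2l (isT : 0 < 2)) h.
have simG : simple (graph_aut e) by rewrite (isog_simple isoA5) simple_Alt5 // card_ord.
case/imsetP: (vtrans) => v _ _.
case/isogP: isoA5 => f injf fG.
case: (orbit_cases (f @* 'C_(graph_aut e)[v | 'P])%G) => [[w w02 sKw]|h5].
  exact: (omega_case vtrans prim injf fG w02 sKw).
exact: (trans_case e_irr vtrans cardG simG prim injf h5).
Qed.
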